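(* Let $m\geq1$, $N\in(\mathbb{N}^* )^m$, let $A\subseteq\mathcal{Z}^m$ be a largely continuous precell mod $N$, $X=\widehat A$ its socle, $(\mu,\nu,\rho)$ a largely continuous presentation of $A$, and $f$ a largely continuous affine map on $A$ such that $\bar f=+\infty$ on $\partial A$. Let $(\alpha_i)_{1\leq i\leq m}\in\mathbb{Q}^m$ and $\beta\in\mathcal{Q}$ be such that $f(a)=\beta+\sum_{1\leq i\leq m}\alpha_ia_i$ on $A$, and extend $f$ to $\mathcal{Q}^m$ by this expression. For every $x\in X$ let $\hat f(x)=f(x,\mu(x))$ if $\alpha_m\geq0$, and $\hat f(x)=f(x,\nu(x))$ otherwise. Then $\hat f$ is a well-defined largely continuous affine map on $X$ with limit $+\infty$ at every point of $\partial X$, and $\min f(A)-|\alpha_m|N_m\leq\hat f(\widehat a)\leq f(a)$ for every $a\in A$.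
   Context: $\mathcal{Z}$ is a $\mathbb{Z}$-group (linearly ordered abelian group with smallest positive element $1$, $|\mathcal{Z}/n\mathcal{Z}|=n$ for all $n\geq1$), $\mathcal{Q}$ its divisible hull ($\mathbb{Q}\subseteq\mathcal{Q}$), $\Gamma=\mathcal{Z}\cup\{+\infty\}$, $\Omega=\mathcal{Q}\cup\{+\infty\}$, $+\infty$ maximal and absorbing for $+$; $|a|=\max(a,-a)$. Topology on $\Omega$ generated by open intervals and $]a,+\infty]$; product topology on $\Omega^m$; $\overline A$ closure; frontier $\partial A$ = closure of $\overline A\setminus A$. Socle $\widehat a=(a_1,\dots,a_{m-1})$, $\widehat A$; $\widehat N=(N_1,\dots,N_{m-1})$. $F_I(\Gamma^m)$: points whose non-$+\infty$ coordinates are exactly those in $I$. Congruence: $a\equiv b\,[n]$ iff $a-b\in n\mathcal{Z}$, and $a\equiv+\infty\,[n]$ always. For $Y\subseteq F_K(\Gamma^k)$, $g:Y\to\Omega$ is affine if constantly $+\infty$ or $g(y)=\alpha_0+\sum_{i\in K}\alpha_iy_i$ ($\alpha_0\in\mathcal{Q}$, $\alpha_i\in\mathbb{Q}$); largely continuous if it extends to a continuous $\bar g$ on $\overline Y$. Largely continuous precells mod $N$: $\Gamma^0$ for $m=0$; for $m\geq1$, $A\subseteq F_I(\Gamma^m)$ such that $\widehat A$ is a largely continuous precell mod $\widehat N$ and for some non-negative largely continuous affine $\mu,\nu:\widehat A\to\Omega$ and integer $0\leq\rho<N_m$ (a largely continuous presentation), $A=\{a\in F_I(\Gamma^m):\widehat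 a\in\widehat A,\ \mu(\widehat a)\leq a_m\leq\nu(\widehat a),\ a_m\equiv\rho\,[N_m]\}$. *)

(* Defs.v *)
From mathcomp Require Import all_boot all_order all_algebra.
Set Implicit Arguments. Unset Strict Implicit. Unset Printing Implicit Defensive.
Import Order.TTheory GRing.Theory Num.Theory.
Local Open Scope ring_scope.

(* A Z-group Z together with its divisible hull Q.                           *)
(* (the copy of the rational 1 in Q; rationals q are q *: zone).              *)
Record zgroup := ZGroup {
  zQ : lmodType rat;
  zle : rel zQ;
  zZ : pred zQ;
  zone : zQ;
  zle_refl : reflexive zle;
  zle_anti : antisymmetric zle;
  zle_trans : transitive zle;
  zle_total : total zle;
  zle_add : forall x y z, zle x y -> zle (x + z) (y + z);
  zZ0 : zZ 0;
  zZ_sub : forall x y, zZ x -> zZ y -> zZ (x - y);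
  zZ_one : zZ zone;
  zone_pos : zle 0 zone /\ zone != 0;
  zone_min : forall z, zZ z -> zle 0 z -> z != 0 -> zle zone z;
  (* |Z / nZ| = n : k |-> class of k*1 is a bijection from {0..n-1} to Z/nZ *)
  zZ_mod : forall n : nat, (0 < n)%N -> forall z, zZ z ->
      exists! k : 'I_n, exists w, zZ w /\ z = (k%:R : rat) *: zone + (n%:R : rat) *: w;
  zhull : forall x : zQ, exists n : nat, (0 < n)%N /\ zZ ((n%:R : rat) *: x)
}.

Section Defs.
Context (G : zgroup).
Local Notation Q := (zQ G).

(* Omega = Q u {+oo}, with None = +oo *)
Definition Omega := option Q.

Definition zlt (x y : Q) : bool := zle x y && (x != y).

Definition leO (x y : Omega) : Prop :=
  match x, y with
  | _, None => True
  | None, Some _ => False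
  | Some a, Some b => zle a b
  end.
Definition ltO (x y : Omega) : Prop :=
  match x, y with
  | None, _ => False
  | Some _, None => True
  | Some a, Some b => zlt a b
  end.

Definition oval (x : Omega) : Q := odflt 0 x.

(* congruence mod n; a == +oo [n] always *)
Definition congr (x y : Omega) (n : nat) : Prop :=
  match x, y with
  | Some a, Some b => exists w, @zZ G w /\ a - b = (n%:R : rat) *: w
  | _, _ => True
  end.

(* basic open set of Omega: ]l, u[ (u = Some b) or ]l, +oo] (u = None) *)
Definition inb (l : Q) (u : option Q) (z : Omega) : Prop :=
  match z with
  | None => u = None
  | Some q => zlt l q /\ (if u is Some b then zlt q b else True)
  end.

Definition openO (V : Omega -> Prop) : Prop :=
  forall z, V z -> exists l u, inb l u z /\ forall w, inb l u w -> V w.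

Definition openk (k : nat) (U : ('I_k -> Omega) -> Prop) : Prop :=
  forall x, U x -> exists (l : 'I_k -> Q) (u : 'I_k -> option Q),
    (forall i, inb (l i) (u i) (x i)) /\
    (forall y, (forall i, inb (l i) (u i) (y i)) -> U y).

Definition closure (k : nat) (Y : ('I_k -> Omega) -> Prop) (x : 'I_k -> Omega) : Prop :=
  forall U, openk U -> U x -> exists y, U y /\ Y y.

Definition frontier (k : nat) (Y : ('I_k -> Omega) -> Prop) : ('I_k -> Omega) -> Prop :=
  closure (fun x => closure Y x /\ ~ Y x).

Definition cont_on (k : nat) (S : ('I_k -> Omega) -> Prop) (g : ('I_k -> Omega) -> Omega) : Prop :=
  forall x, S x -> forall V, openO V -> V (g x) ->
    exists U, openk U /\ U x /\ forall y, U y -> S y -> V (g y).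

Definition lc_ext (k : nat) (Y : ('I_k -> Omega) -> Prop) (g gbar : ('I_k -> Omega) -> Omega) : Prop :=
  (forall y, Y y -> gbar y = g y) /\ cont_on (closure Y) gbar.

Definition lc (k : nat) (Y : ('I_k -> Omega) -> Prop) (g : ('I_k -> Omega) -> Omega) : Prop :=
  exists gbar, lc_ext Y g gbar.

(* F_I(Gamma^k): coordinates in I are in Z, the others are +oo *)
Definition inF (k : nat) (I : {set 'I_k}) (a : 'I_k -> Omega) : Prop :=
  forall i, if i \in I then exists z, @zZ G z /\ a i = Some z else a i = None.

Definition is_affine (k : nat) (K : {set 'I_k}) (Y : ('I_k -> Omega) -> Prop)
    (g : ('I_k -> Omega) -> Omega) : Prop :=
  (forall y, Y y -> g y = None) \/
  exists (a0 : Q) (al : 'I_k -> rat),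
    forall y, Y y -> g y = Some (a0 + \sum_(i in K) al i *: oval (y i)).

Definition nonneg (k : nat) (Y : ('I_k -> Omega) -> Prop) (g : ('I_k -> Omega) -> Omega) : Prop :=
  forall y, Y y -> leO (Some 0) (g y).

Definition socle (T : Type) (n : nat) (a : 'I_n.+1 -> T) : 'I_n -> T :=
  fun i => a (widen_ord (leqnSn n) i).
Definition socleI (n : nat) (I : {set 'I_n.+1}) : {set 'I_n} :=
  [set i : 'I_n | widen_ord (leqnSn n) i \in I].
Definition socleS (n : nat) (A : ('I_n.+1 -> Omega) -> Prop) : ('I_n -> Omega) -> Prop :=
  fun x => exists a, A a /\ forall i, socle a i = x i.

Definition extend (T : Type) (n : nat) (x : 'I_n -> T) (t : T) : 'I_n.+1 -> T :=
  fun i => match unlift ord_max i with Some j => x j | None => t end.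

Definition lc_pres (n : nat) (N : 'I_n.+1 -> nat) (I : {set 'I_n.+1})
    (A : ('I_n.+1 -> Omega) -> Prop) (mu nu : ('I_n -> Omega) -> Omega) (rho : nat) : Prop :=
  [/\ is_affine (socleI I) (socleS A) mu, is_affine (socleI I) (socleS A) nu,
      [/\ nonneg (socleS A) mu, nonneg (socleS A) nu,
          lc (socleS A) mu & lc (socleS A) nu],
      (rho < N ord_max)%N &
      forall a, A a <-> [/\ inF I a, socleS A (socle a),
                           leO (mu (socle a)) (a ord_max),
                           leO (a ord_max) (nu (socle a)) &
                           congr (a ord_max) (Some ((rho%:R : rat) *: zone G)) (N ord_max)]].

Fixpoint lc_precell (m : nat) : ('I_m -> nat) -> {set 'I_m} -> (('I_m -> Omega) -> Prop) -> Prop :=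
  match m with
  | 0 => fun _ _ A => forall a, A a
  | n.+1 => fun N I A =>
      lc_precell (socle N) (socleI I) (socleS A) /\
      exists mu nu rho, lc_pres N I A mu nu rho
  end.

Definition affQ (k : nat) (beta : Q) (alpha : 'I_k -> rat) (x : 'I_k -> Q) : Q :=
  beta + \sum_(i < k) alpha i *: x i.

(* hat f (x) = f(x, mu x) if alpha_m >= 0, f(x, nu x) otherwise;
   None (= +oo) when the chosen bound is +oo (not well-defined case) *)
Definition fhat (n : nat) (beta : Q) (alpha : 'I_n.+1 -> rat)
    (mu nu : ('I_n -> Omega) -> Omega) (x : 'I_n -> Omega) : Omega :=
  match (if 0 <= alpha ord_max then mu x else nu x) with
  | Some t => Some (affQ beta alpha (extend (fun i => oval (x i)) t))
  | None => None
  end.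

End Defs.

(* Main.v *)
Require Import Defs.
From mathcomp Require Import all_boot all_order all_algebra.
From Stdlib Require Import Classical FunctionalExtensionality ClassicalEpsilon.
From mathcomp Require Import ring.
Set Implicit Arguments. Unset Strict Implicit. Unset Printing Implicit Defensive.
Import Order.TTheory GRing.Theory Num.Theory.
Local Open Scope ring_scope.


Section OG.
Variable G : zgroup.
Local Notation Q := (zQ G).
Local Notation le := (@zle G).
Local Notation lt := (@zlt G).
Local Notation one := (zone G).
Local Notation isZ := (@zZ G).

Lemma le_refl' (x : Q) : le x x. Proof. exact: zle_refl. Qed.
Lemma le_tr (x y z : Q) : le x y -> le y z -> le x z.
Proof. move=> h1 h2; exact: (zle_trans h1 h2). Qed.
Lemma le_anti' (x y : Q) : le x y -> le y x -> x = y.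
Proof. move=> h1 h2; apply: (@zle_anti G); by rewrite h1 h2. Qed.
Lemma le_total' (x y : Q) : le x y || le y x. Proof. exact: zle_total. Qed.

Lemma zleD2r (x y z : Q) : le (x + z) (y + z) = le x y.
Proof.
apply/idP/idP => h; last exact: zle_add.
by have := zle_add (- z) h; rewrite !addrK.
Qed.
Lemma zleD2l (x y z : Q) : le (z + x) (z + y) = le x y.
Proof. by rewrite ![z + _]addrC zleD2r. Qed.
Lemma zsubge0 (x y : Q) : le 0 (y - x) = le x y.
Proof. by rewrite -(zleD2r _ _ x) add0r subrK. Qed.
Lemma zleN2 (x y : Q) : le (- x) (- y) = le y x.
Proof. by rewrite -zsubge0 opprK addrC zsubge0. Qed.
Lemma zleD (a b c d : Q) : le a b -> le c d -> le (a + c) (b + d).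
Proof.
move=> h1 h2; apply: (@le_tr _ (b + c)); first by rewrite zleD2r.
by rewrite zleD2l.
Qed.
Lemma zltE (x y : Q) : lt x y = le x y && (x != y). Proof. by []. Qed.
Lemma zltNge (x y : Q) : lt x y = ~~ le y x.
Proof.
rewrite zltE; case h: (le y x) => /=.
  case h2: (le x y) => //=; by rewrite (le_anti' h2 h) eqxx.
have := le_total' x y; rewrite h orbF => ->/=.
by apply/eqP => e; move: h; rewrite e le_refl'.
Qed.
Lemma zleNgt (x y : Q) : le x y = ~~ lt y x.
Proof. by rewrite zltNge negbK. Qed.
Lemma zltW (x y : Q) : lt x y -> le x y. Proof. by case/andP. Qed.
Lemma lt_le_tr (x y z : Q) : lt x y -> le y z -> lt x z.
Proof.
rewrite !zltNge => h1 h2; apply/negP => h3; move/negP: h1; apply.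
exact: le_tr h2 h3.
Qed.
Lemma le_lt_tr (x y z : Q) : le x y -> lt y z -> lt x z.
Proof.
rewrite !zltNge => h1 h2; apply/negP => h3; move/negP: h2; apply.
exact: le_tr h3 h1.
Qed.
Lemma zltD2r (x y z : Q) : lt (x + z) (y + z) = lt x y.
Proof. by rewrite !zltNge zleD2r. Qed.
Lemma zsubgt0 (x y : Q) : lt 0 (y - x) = lt x y.
Proof. by rewrite !zltNge -(zleD2r _ 0 x) subrK add0r. Qed.
Lemma zltN2 (x y : Q) : lt (- x) (- y) = lt y x.
Proof. by rewrite !zltNge zleN2. Qed.
Lemma zltD (a b c d : Q) : lt a b -> le c d -> lt (a + c) (b + d).
Proof.
move=> h1 h2; apply: (@lt_le_tr _ (b + c)); first by rewrite zltD2r.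
by rewrite zleD2l.
Qed.
Lemma zltDl (a b c d : Q) : le a b -> lt c d -> lt (a + c) (b + d).
Proof. by move=> h1 h2; rewrite addrC (addrC b); apply: zltD. Qed.

Lemma muln_ge0 (x : Q) k : le 0 x -> le 0 (x *+ k).
Proof.
move=> h; elim: k => [|k ih]; first by rewrite mulr0n le_refl'.
by rewrite mulrSr -(addr0 0); apply: zleD.
Qed.
Lemma muln_le0 (x : Q) k : le x 0 -> le (x *+ k) 0.
Proof.
move=> h; elim: k => [|k ih]; first by rewrite mulr0n le_refl'.
by rewrite mulrSr -(addr0 0); apply: zleD.
Qed.
Lemma scale_ge0 (q : rat) (x : Q) : 0 <= q -> le 0 x -> le 0 (q *: x).
Proof.
move=> hq hx; rewrite -[q]divq_num_den.
have := numq_ge0 q; rewrite hq; case: (numq q) => // a _.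
have := denq_gt0 q; case: (denq q) => // b; rewrite ltz_nat => hb.
rewrite -scalerA -[((Posz a)%:~R : rat)]pmulrn scaler_nat; apply: muln_ge0.
set y := _ *: x.
have hy : y *+ b = x.
  by rewrite /y -scaler_nat scalerA -[(b%:~R : rat)]pmulrn mulfV ?scale1r // pnatr_eq0 -lt0n.
have := le_total' 0 y; case/orP => // h.
have := muln_le0 b h; rewrite hy => h2.
have x0 := le_anti' h2 hx; move: hy; rewrite x0 => hy.
suff -> : y = 0 by rewrite le_refl'.
rewrite /y x0 scaler0 //.
Qed.
Lemma scale_le (q : rat) (x y : Q) : 0 <= q -> le x y -> le (q *: x) (q *: y).
Proof. by move=> hq h; rewrite -zsubge0 -scalerBr; apply: scale_ge0; rewrite // zsubge0. Qed.
Lemma scale_leN (q : rat) (x y : Q) : q <= 0 -> le x y -> le (q *: y) (q *: x).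
Proof.
move=> hq h; rewrite -zleN2 -!scaleNr; apply: scale_le => //.
by rewrite oppr_ge0.
Qed.
Lemma scale_lel (p q : rat) (x : Q) : p <= q -> le 0 x -> le (p *: x) (q *: x).
Proof. by move=> h hx; rewrite -zsubge0 -scalerBl; apply: scale_ge0; rewrite // subr_ge0. Qed.
Lemma scale_gt0 (q : rat) (x : Q) : 0 < q -> lt 0 x -> lt 0 (q *: x).
Proof.
move=> hq /andP[hx nx]; rewrite zltE scale_ge0 ?(ltW hq) //=.
have : q *: x != 0 by rewrite scaler_eq0 negb_or (gt_eqF hq) eq_sym nx.
by rewrite eq_sym.
Qed.
Lemma scale_ltl (p q : rat) (x : Q) : p < q -> lt 0 x -> lt (p *: x) (q *: x).
Proof. by move=> h hx; rewrite -zsubgt0 -scalerBl; apply: scale_gt0; rewrite // subr_gt0. Qed.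

Lemma one_gt0 : lt 0 one.
Proof. by case: (zone_pos G) => h1 h2; rewrite zltE h1 eq_sym. Qed.
Lemma natone_ge0 (k : nat) : le 0 ((k%:R : rat) *: one).
Proof. apply: scale_ge0 => //; exact: zltW one_gt0. Qed.

Lemma Z0 : isZ 0. Proof. exact: zZ0. Qed.
Lemma ZB (x y : Q) : isZ x -> isZ y -> isZ (x - y). Proof. exact: zZ_sub. Qed.
Lemma ZN (x : Q) : isZ x -> isZ (- x).
Proof. by move=> h; rewrite -sub0r; apply: ZB => //; exact: Z0. Qed.
Lemma ZD (x y : Q) : isZ x -> isZ y -> isZ (x + y).
Proof. by move=> h1 h2; rewrite -[y]opprK; apply: ZB => //; apply: ZN. Qed.
Lemma Zmuln (x : Q) k : isZ x -> isZ (x *+ k).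
Proof. by move=> h; elim: k => [|k ih]; [rewrite mulr0n; exact: Z0|rewrite mulrSr; apply: ZD]. Qed.
Lemma Zscalen (x : Q) (k : nat) : isZ x -> isZ ((k%:R : rat) *: x).
Proof. by move=> h; rewrite scaler_nat; apply: Zmuln. Qed.
Lemma Zone : isZ one. Proof. exact: zZ_one. Qed.
Lemma Znat (k : nat) : isZ ((k%:R : rat) *: one).
Proof. apply: Zscalen; exact: Zone. Qed.

Lemma Zpos_ge1 (d : Q) : isZ d -> lt 0 d -> le one d.
Proof. by move=> hd /andP[h1 h2]; apply: zone_min => //; rewrite eq_sym. Qed.
Lemma Z_ge0 (d : Q) : isZ d -> lt (- one) d -> le 0 d.
Proof.
move=> hd h; have : le one (d + one).
  apply: Zpos_ge1; first by apply: ZD => //; exact: Zone.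
  by rewrite -(addNr one) zltD2r.
by rewrite -{1}(add0r one) zleD2r.
Qed.
Lemma Z_lt1 (d : Q) : isZ d -> le 0 d -> lt d one -> d = 0.
Proof.
move=> hd h0 h1; case: (eqVneq d 0) => // dn.
have := Zpos_ge1 hd; rewrite zltE h0 eq_sym dn => /(_ isT) h.
by move: h1; rewrite zltNge h.
Qed.

Lemma natone_S (k : nat) : ((k.+1%:R : rat) *: one) = (k%:R : rat) *: one + one.
Proof. by rewrite -natr1 scalerDl scale1r. Qed.

Lemma Z_count (d : Q) (K : nat) : isZ d -> le 0 d -> lt d ((K%:R : rat) *: one) ->
  exists j : nat, (j < K)%N /\ d = (j%:R : rat) *: one.
Proof.
move=> hd h0; elim: K => [|K ih] h.
  by move: h; rewrite scale0r zltNge h0.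
case hK: (lt d ((K%:R : rat) *: one)).
  by case: (ih hK) => j [hj ->]; exists j; split => //; apply: ltnW.
exists K; split => //.
have e : d - (K%:R : rat) *: one = 0.
  apply: Z_lt1; first by apply: ZB => //; exact: Znat.
    by rewrite zsubge0 zleNgt hK.
  by rewrite -(zltD2r _ _ ((K%:R : rat) *: one)) subrK addrC -natone_S.
by apply/eqP; rewrite -subr_eq0 e.
Qed.

Lemma floorQ (q : Q) : exists w, isZ w /\ le w q /\ lt q (w + one).
Proof.
case: (zhull q) => n [hn hz].
case: (zZ_mod hn hz) => k [[w [hw e]] _].
exists w; split => //.
have eq : q = ((k%:R / n%:R : rat) *: one) + w.
  apply: (@scalerI _ _ (n%:R : rat)); first by rewrite pnatr_eq0 -lt0n.
  rewrite e scalerDr scalerA mulrC divfK ?pnatr_eq0 -?lt0n //.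
have hk : (k%:R / n%:R : rat) < 1.
  by rewrite ltr_pdivrMr ?ltr0n // mul1r ltr_nat.
have hk0 : 0 <= (k%:R / n%:R : rat) by rewrite divr_ge0.
split.
  rewrite eq -{1}(add0r w) zleD2r; apply: scale_ge0 => //; exact: zltW one_gt0.
rewrite eq (addrC w) zltD2r -{2}(scale1r one); apply: scale_ltl => //; exact: one_gt0.
Qed.

Lemma bigZ (q : Q) : exists w, isZ w /\ lt q w /\ le 0 w.
Proof.
case: (floorQ q) => w [hw [h1 h2]].
case h: (le 0 (w + one)).
  by exists (w + one); split => //; apply: ZD => //; exact: Zone.
exists 0; split; first exact: Z0.
split; last exact: le_refl'.
apply: (lt_le_tr h2); by have := le_total' 0 (w + one); rewrite h.
Qed.

Lemma zle_subl (x y z : Q) : le (x - y) z = le x (y + z).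
Proof. by rewrite -(zleD2r _ _ y) subrK addrC. Qed.
Lemma zlt_subl (x y z : Q) : lt (x - y) z = lt x (y + z).
Proof. by rewrite -(zltD2r _ _ y) subrK addrC. Qed.
Lemma zle_subr (x y z : Q) : le x (y - z) = le (x + z) y.
Proof. by rewrite -(zleD2r _ _ z) subrK. Qed.
Lemma zlt_subr (x y z : Q) : lt x (y - z) = lt (x + z) y.
Proof. by rewrite -(zltD2r _ _ z) subrK. Qed.
Lemma scale_lt (q : rat) (x y : Q) : 0 < q -> lt x y -> lt (q *: x) (q *: y).
Proof. by move=> hq h; rewrite -zsubgt0 -scalerBr; apply: scale_gt0; rewrite // zsubgt0. Qed.
Lemma zle_addr (x y : Q) : le 0 y -> le x (x + y).
Proof. by move=> h; rewrite -{1}(addr0 x) zleD2l. Qed.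
Lemma zle_subr0 (x y : Q) : le 0 y -> le (x - y) x.
Proof. by move=> h; rewrite zle_subl addrC; apply: zle_addr. Qed.

End OG.


Section Topo.
Variable G : zgroup.
Local Notation Q := (zQ G).
Local Notation le := (@zle G).
Local Notation lt := (@zlt G).
Local Notation one := (zone G).
Local Notation isZ := (@zZ G).
Local Notation clos := Defs.closure.
Local Notation Om := (Omega G).

Definition box k (l : 'I_k -> Q) (u : 'I_k -> option Q) (y : 'I_k -> Om) : Prop :=
  forall i, inb (l i) (u i) (y i).

Lemma open_box k l u : openk (@box k l u).
Proof. by move=> x hx; exists l, u. Qed.

Definition zmax (a b : Q) := if le a b then b else a.
Definition omin (u v : option Q) :=
  match u, v with
  | None, _ => v
  | _, None => u
  | Some a, Some b => Some (if le a b then a else b)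
  end.

Lemma lt_zmax a b q : lt (zmax a b) q <-> lt a q /\ lt b q.
Proof.
rewrite /zmax; case h: (le a b); split.
- move=> hb; split => //; exact: le_lt_tr h hb.
- by case.
- move=> /= ha; split => //; apply: (le_lt_tr _ ha); have := le_total' a b; rewrite h.
  by [].
- by case.
Qed.
Lemma lt_min a b q : lt q (if le a b then a else b) <-> lt q a /\ lt q b.
Proof.
case h: (le a b); split.
- move=> ha; split => //; exact: lt_le_tr ha h.
- by case.
- move=> /= hb; split => //; apply: (lt_le_tr hb); have := le_total' a b; rewrite h.
  by [].
- by case.
Qed.

Lemma inbI l1 u1 l2 u2 z :
  inb (zmax l1 l2) (omin u1 u2) z <-> inb l1 u1 z /\ inb l2 u2 z.
Proof.
case: z => [q|] /=.
  rewrite lt_zmax; case: u1 => [b1|]; case: u2 => [b2|] /=; rewrite ?lt_min; tauto.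
case: u1 => [b1|]; case: u2 => [b2|] //=; split => //; by case.
Qed.

Lemma openI k (U V : ('I_k -> Om) -> Prop) :
  openk U -> openk V -> openk (fun y => U y /\ V y).
Proof.
move=> hU hV x [ux vx].
case: (hU x ux) => l1 [u1 [h1 h1']]; case: (hV x vx) => l2 [u2 [h2 h2']].
exists (fun i => zmax (l1 i) (l2 i)), (fun i => omin (u1 i) (u2 i)); split.
  by move=> i; apply/inbI.
move=> y hy; split; [apply: h1' | apply: h2'] => i; by case: (proj1 (inbI (l1 i) (u1 i) (l2 i) (u2 i) (y i)) (hy i)).
Qed.

Lemma openT k : openk (fun _ : 'I_k -> Om => True).
Proof.
move=> x _; exists (fun i => oval (x i) - one), (fun _ => None); split => // i.
case: (x i) => [q|] //=; split => //.
by rewrite -zsubgt0 opprB addrCA subrr addr0 one_gt0.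
Qed.

Lemma clo_sub k (Y : ('I_k -> Om) -> Prop) y : Y y -> clos Y y.
Proof. by move=> hy U _ hU; exists y. Qed.

Lemma notclo k (Y : ('I_k -> Om) -> Prop) p :
  ~ clos Y p -> exists U, openk U /\ U p /\ forall y, U y -> ~ Y y.
Proof.
move=> h; apply: NNPP => h2; apply: h => U hU hp.
apply: NNPP => h3; apply: h2; exists U; split => //; split => // y hy hY.
by apply: h3; exists y.
Qed.

Lemma openO_inb l u : openO (@inb G l u).
Proof. by move=> z hz; exists l, u. Qed.

Lemma Zgap (x z : Q) : isZ x -> isZ z -> lt x z -> lt z (x + one) -> False.
Proof.
move=> hx hz h1 h2.
have e := Z_lt1 (ZB hz hx) (zltW (etrans (zsubgt0 _ _) h1)).
have : lt (z - x) one by rewrite -(zltD2r _ _ x) subrK addrC.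
move/e => /eqP; rewrite subr_eq0 => /eqP ex; move: h1; rewrite ex zltE eqxx andbF.
by [].
Qed.

Definition intvec k (x : 'I_k -> Om) := forall i, exists z, isZ z /\ x i = Some z.

Lemma iso k (S : ('I_k -> Om) -> Prop) (x : 'I_k -> Om) :
  (forall y, S y -> intvec y) -> intvec x ->
  exists U, openk U /\ U x /\ forall y, U y -> clos S y -> forall i, y i = x i.
Proof.
move=> hS hx.
exists (box (fun i => oval (x i) - one) (fun i => Some (oval (x i) + one))).
split; first exact: open_box.
have hin : forall q : Q, lt (q - one) q /\ lt q (q + one).
  move=> q; split; first by rewrite -zsubgt0 opprB addrCA subrr addr0 one_gt0.
  by rewrite -zsubgt0 addrAC subrr add0r one_gt0.
split.
  move=> i; case: (hx i) => z [hz ->] /=; exact: hin.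
move=> y hy hcl i; apply: NNPP => ne.
case: (hx i) => z [hz exi].
have := hy i; rewrite exi /=; case eyi: (y i) => [q|] //= [hq1 hq2].
have nqz : q != z by apply/eqP => e; apply: ne; rewrite eyi e.
have [lo [hi [hlo hno]]] : exists lo hi, (lt lo q /\ lt q hi) /\
    (forall w, isZ w -> lt lo w -> lt w hi -> False).
  case hl: (le z q).
    have hzq : lt z q by rewrite zltE hl eq_sym.
    exists z, (z + one); split => // w hw h1 h2; exact: Zgap hz hw h1 h2.
  have hqz : lt q z by rewrite zltNge hl.
  exists (z - one), z; split => // w hw h1 h2.
  have h2' : lt w (z - one + one) by rewrite subrK.
  exact: (Zgap (ZB hz (@Zone G)) hw h1 h2').
pose U := box (fun j => if j == i then lo else oval (x j) - one)
              (fun j => if j == i then Some hi else Some (oval (x j) + one)).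
have : U y.
  move=> j; rewrite /U; case: (eqVneq j i) => [->|nji]; first by rewrite eyi.
  exact: hy j.
have oU : openk U by apply: open_box.
case/(hcl U oU) => w [hw hSw].
case: (hS w hSw i) => wi [hwi ewi].
have := hw i; rewrite eqxx ewi /= => [[h1 h2]].
exact: (hno wi hwi h1 h2).
Qed.
End Topo.


Lemma widen_lift n (i : 'I_n) : widen_ord (leqnSn n) i = lift ord_max i.
Proof. by apply: val_inj; rewrite /= /bump leqNgt ltn_ord. Qed.

Lemma extend_w T n (x : 'I_n -> T) t i : extend x t (widen_ord (leqnSn n) i) = x i.
Proof. by rewrite /extend widen_lift liftK. Qed.
Lemma extend_max T n (x : 'I_n -> T) t : extend x t ord_max = t.
Proof. by rewrite /extend unlift_none. Qed.
Lemma socle_extend T n (x : 'I_n -> T) t i : socle (extend x t) i = x i.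
Proof. exact: extend_w. Qed.
Lemma extend_socle T n (a : 'I_n.+1 -> T) : extend (socle a) (a ord_max) = a.
Proof.
apply: functional_extensionality => i; rewrite /extend.
case: unliftP => [j ->|->] //.
by rewrite /socle widen_lift.
Qed.
Lemma extend_map T U n (g : T -> U) (x : 'I_n -> T) t i :
  g (extend x t i) = extend (fun j => g (x j)) (g t) i.
Proof. by rewrite /extend; case: (unlift ord_max i). Qed.

Section Topo2.
Variable G : zgroup.
Local Notation Q := (zQ G).
Local Notation le := (@zle G).
Local Notation lt := (@zlt G).
Local Notation one := (zone G).
Local Notation isZ := (@zZ G).
Local Notation clos := Defs.closure.
Local Notation Om := (Omega G).

Lemma box_extract n (W : ('I_n.+1 -> Om) -> Prop) (x : 'I_n -> Om) tau :
  openk W -> W (extend x tau) ->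
  exists U l u, openk U /\ U x /\ inb l u tau /\
    forall y t, U y -> inb l u t -> W (extend y t).
Proof.
move=> oW hW; case: (oW _ hW) => l [u [h1 h2]].
exists (box (socle l) (socle u)), (l ord_max), (u ord_max); split; first exact: open_box.
split; first by move=> i; have := h1 (widen_ord (leqnSn n) i); rewrite extend_w.
split; first by have := h1 ord_max; rewrite extend_max.
move=> y t hy ht; apply: h2 => i; rewrite /extend.
case: unliftP => [j ->|->] //.
by have := hy j; rewrite /socle widen_lift.
Qed.

Lemma inter_fin k (x : 'I_k -> Om) (P : nat -> ('I_k -> Om) -> Prop) (K : nat) :
  (forall j, (j < K)%N -> exists U, openk U /\ U x /\ forall y, U y -> P j y) ->
  exists U, openk U /\ U x /\ forall y, U y -> forall j, (j < K)%N -> P j y.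
Proof.
elim: K => [|K ih] h.
  by exists (fun _ => True); split; [exact: openT|split => // y _ j].
case: ih => [j hj|U [oU [Ux hU]]]; first by apply: h; apply: ltnW.
case: (h K (ltnSn K)) => V [oV [Vx hV]].
exists (fun y => U y /\ V y); split; first exact: openI.
split => // y [Uy Vy] j; rewrite ltnS leq_eqVlt; case/orP => [/eqP ->|hj].
  exact: hV.
exact: hU.
Qed.

Lemma clos_frontier k (Y : ('I_k -> Om) -> Prop) x : frontier Y x -> clos Y x.
Proof.
move=> h U oU Ux; case: (h U oU Ux) => y [Uy [cy _]].
exact: cy U oU Uy.
Qed.

End Topo2.


Lemma socle_extend_eq T n (x : 'I_n -> T) t : socle (extend x t) = x.
Proof. apply: functional_extensionality => i; exact: socle_extend. Qed.

Section Main.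
Variables (G : zgroup) (n : nat) (N : 'I_n.+1 -> nat)
    (A : ('I_n.+1 -> Omega G) -> Prop) (mu nu : ('I_n -> Omega G) -> Omega G) (rho : nat)
    (f : ('I_n.+1 -> Omega G) -> Omega G) (alpha : 'I_n.+1 -> rat) (beta : zQ G)
    (fbar : ('I_n.+1 -> Omega G) -> Omega G).
Hypothesis HN : forall i, (0 < N i)%N.
Hypothesis Hint : forall a, A a -> forall i, exists z, @zZ G z /\ a i = Some z.
Hypothesis Hpres : lc_pres N [set: 'I_n.+1] A mu nu rho.
Hypothesis Hext : lc_ext A f fbar.
Hypothesis Hfr : forall x, frontier A x -> fbar x = None.
Hypothesis Hf : forall a, A a -> f a = Some (affQ beta alpha (fun i => oval (a i))).

Local Notation Q := (zQ G).
Local Notation le := (@zle G).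
Local Notation lt := (@zlt G).
Local Notation one := (zone G).
Local Notation isZ := (@zZ G).
Local Notation clos := Defs.closure.
Local Notation Om := (Omega G).
Local Notation X := (socleS A).
Local Notation s := (alpha ord_max).
Local Notation Nq := ((N ord_max)%:R : rat).
Local Notation Nn := (((N ord_max)%:R : rat) *: zone G).
Local Notation rh := (((rho%:R : rat)) *: zone G).
Definition Sm (y : 'I_n -> Om) : Q :=
  beta + \sum_(i < n) alpha (widen_ord (leqnSn n) i) *: oval (y i).
Local Notation bnd y := (if 0 <= alpha ord_max then mu y else nu y).

Lemma charA a : A a <-> [/\ inF [set: 'I_n.+1] a, X (socle a), leO (mu (socle a)) (a ord_max),
   leO (a ord_max) (nu (socle a)) & congr (a ord_max) (Some rh) (N ord_max)].
Proof. by case: Hpres. Qed.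

Lemma memX y : X y -> exists a, A a /\ socle a = y.
Proof. case => a [ha e]; exists a; split => //; exact: functional_extensionality. Qed.

Lemma X_int y : X y -> intvec y.
Proof.
case/memX => a [ha <-] i; exact: Hint.
Qed.

Lemma memX2 y : X y -> exists z, isZ z /\ A (extend y (Some z)) /\ leO (mu y) (Some z) /\
  leO (Some z) (nu y) /\ exists w, isZ w /\ z - rh = Nq *: w.
Proof.
case/memX => a [ha ey]; case: (Hint ha ord_max) => z [hz ez].
have ea : a = extend y (Some z) by rewrite -ez -ey extend_socle.
exists z; split => //; split; first by rewrite -ea.
case/charA: ha => _ _; rewrite ey ez /= => h1 h2 h3; do 2!(split => //).
Qed.

Lemma Aext y t : X y -> isZ t -> leO (mu y) (Some t) -> leO (Some t) (nu y) ->
  (exists w, isZ w /\ t - rh = Nq *: w) -> A (extend y (Some t)).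
Proof.
move=> hy ht h1 h2 h3; apply/charA; rewrite socle_extend_eq extend_max; split => //.
- move=> i; rewrite in_setT /extend; case: unliftP => [j _|_]; last by exists t.
  exact: X_int.
Qed.

Lemma sum_ext (y : 'I_n -> Q) t :
  affQ beta alpha (extend y t) = beta + \sum_(i < n) alpha (widen_ord (leqnSn n) i) *: y i + s *: t.
Proof.
rewrite /affQ big_ord_recr /= extend_max addrA; congr (_ + _ + _).
by apply: eq_bigr => i _; rewrite extend_w.
Qed.

Lemma fext y t : A (extend y (Some t)) -> f (extend y (Some t)) = Some (Sm y + s *: t).
Proof.
move=> h; rewrite Hf //; congr Some.
have -> : (fun i => oval (extend y (Some t) i)) = extend (fun j => oval (y j)) t.
  apply: functional_extensionality => i; exact: (extend_map (@oval G)).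
by rewrite sum_ext.
Qed.

Lemma fhatE y sy : bnd y = Some sy -> fhat beta alpha mu nu y = Some (Sm y + s *: sy).
Proof. by move=> e; rewrite /fhat e sum_ext. Qed.

Lemma notA_ext x tau : ~ X x -> ~ A (extend x tau).
Proof. move=> hx ha; apply: hx; exists (extend x tau); split => // i; exact: socle_extend. Qed.

Lemma nearfr x tau c : ~ A (extend x tau) ->
  exists U l u, openk U /\ U x /\ inb l u tau /\
    forall y t, U y -> inb l u t -> A (extend y t) -> ltO (Some c) (f (extend y t)).
Proof.
move=> hA; case: (classic (clos A (extend x tau))) => hc.
  have hfr : frontier A (extend x tau) by apply: clo_sub; split.
  have fb := Hfr hfr.
  case: Hext => Hagree Hcont.
  have oV : openO (@inb G c None) by apply: openO_inb.
  case: (Hcont _ hc (@inb G c None) oV); first by rewrite fb.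
  move=> W [oW [Wp hW]].
  case: (box_extract oW Wp) => U [l [u [oU [Ux [ht hU]]]]].
  exists U, l, u; refine (conj oU (conj Ux (conj ht _))) => y t Uy hlt hAy.
  have := hW _ (hU _ _ Uy hlt) (clo_sub hAy); rewrite Hagree //.
  by case: (f (extend y t)) => [v|] //= [].
case: (notclo hc) => W [oW [Wp hW]].
case: (box_extract oW Wp) => U [l [u [oU [Ux [ht hU]]]]].
exists U, l, u; refine (conj oU (conj Ux (conj ht _))) => y t Uy hlt hAy.
by case: (hW _ (hU _ _ Uy hlt)).
Qed.


Lemma Nq_gt0 : 0 < Nq. Proof. by rewrite ltr0n. Qed.
Lemma Nq_ge1 : 1 <= Nq. Proof. by rewrite ler1n. Qed.
Lemma Nn_ge0 : le 0 Nn. Proof. exact: natone_ge0. Qed.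

Lemma divfloor (d : Q) : le 0 d ->
  exists w, isZ w /\ le 0 w /\ le (Nq *: w) d /\ lt d (Nq *: w + Nn).
Proof.
move=> hd; case: (floorQ (Nq^-1 *: d)) => w [hw [h1 h2]].
have hq : Nq *: (Nq^-1 *: d) = d by rewrite scalerA mulfV ?scale1r // gt_eqF // Nq_gt0.
have hd' : le 0 (Nq^-1 *: d) by apply: scale_ge0; rewrite // invr_ge0 ltW // Nq_gt0.
exists w; split => //; split.
  apply: Z_ge0 => //; rewrite -(zltD2r _ _ one) addNr; exact: le_lt_tr hd' h2.
split; first by rewrite -[X in le _ X]hq; apply: scale_le => //; rewrite ltW // Nq_gt0.
by rewrite -[X in lt X _]hq -scalerDr; apply: scale_lt => //; exact: Nq_gt0.
Qed.

Lemma wd y : X y -> bnd y <> None.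
Proof.
move=> hy; case: (memX2 hy) => z [hz [hAz [hmu [hnu [w0 [hw0 ew0]]]]]].
case: ifP => hs.
  by move=> e; move: hmu; rewrite e.
move=> e.
have hs' : s < 0 by rewrite ltNge hs.
have nA : ~ A (extend y None).
  by move=> h; case: (Hint h ord_max) => zz [_]; rewrite extend_max.
case: (nearfr (Sm y + s *: z) nA) => U [l [u [oU [Uy [hu hU]]]]].
case: (bigZ (l - z)) => w [hw [hlw hw0']].
pose t := z + Nq *: w.
have ht : isZ t by apply: ZD hz (Zscalen _ hw).
have hNw : le w (Nq *: w) by rewrite -{1}(scale1r w); apply: scale_lel => //; exact: Nq_ge1.
have hzt : le z t by apply: zle_addr; exact: le_tr hw0' hNw.
have hA : A (extend y (Some t)).
  apply: Aext => //.
  - by case: (mu y) hmu => [m|] //= hm; exact: le_tr hm hzt.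
  - by rewrite e.
  - exists (w0 + w); split; first exact: ZD.
    by rewrite /t addrAC ew0 scalerDr.
have hlt : inb l u (Some t).
  rewrite hu /=; split => //.
  by rewrite /t -zlt_subl; exact: lt_le_tr hlw hNw.
have := hU _ _ Uy hlt hA; rewrite fext //= zltNge zleD2l.
by rewrite scale_leN // ltW.
Qed.

Lemma fib y sy : X y -> bnd y = Some sy -> exists t, isZ t /\ A (extend y (Some t)) /\ le (sy - Nn) t /\ le t (sy + Nn) /\ le (s *: t) (s *: sy + (`|s| * Nq) *: one).
Proof.
move=> hy e; case: (memX2 hy) => z [hz [hAz [hmu [hnu [w0 [hw0 ew0]]]]]].
move: e; case: ifP => hs e.
  move: hmu; rewrite e /= => hsz.
  case: (divfloor (etrans (zsubge0 _ _) hsz)) => w [hw [hw0' [h1 h2]]].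
  pose t := z - Nq *: w.
  have ht : isZ t by apply: ZB hz (Zscalen _ hw).
  have hts : le sy t by rewrite /t zle_subr addrC -zle_subr.
  have htz : le t z by apply: zle_subr0; apply: scale_ge0 => //; rewrite ltW // Nq_gt0.
  have htN : lt (t - sy) Nn by rewrite /t addrAC zlt_subl.
  exists t; split => //; split.
    apply: Aext => //; first by rewrite e.
      by case: (nu y) hnu => [m|] //= hm; exact: le_tr htz hm.
    exists (w0 - w); split; first exact: ZB.
    by rewrite /t addrAC ew0 scalerBr.
  split; first exact: le_tr (zle_subr0 _ Nn_ge0) hts.
  split; first by rewrite -zle_subl; exact: zltW.
  rewrite ger0_norm // -scalerA -zle_subl -scalerBr; apply: scale_le => //.
  exact: zltW.
have hs' : s < 0 by rewrite ltNge hs.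
move: hnu; rewrite e /= => hzs.
case: (divfloor (etrans (zsubge0 _ _) hzs)) => w [hw [hw0' [h1 h2]]].
pose t := z + Nq *: w.
have ht : isZ t by apply: ZD hz (Zscalen _ hw).
have hts : le t sy by rewrite /t addrC -zle_subr.
have hzt : le z t by apply: zle_addr; apply: scale_ge0 => //; rewrite ltW // Nq_gt0.
have htN : lt (sy - t) Nn by rewrite /t opprD addrA zlt_subl.
exists t; split => //; split.
  apply: Aext => //; last first.
    exists (w0 + w); split; first exact: ZD.
    by rewrite /t addrAC ew0 scalerDr.
  - by rewrite e.
  - by case: (mu y) hmu => [m|] //= hm; exact: le_tr hm hzt.
split; first by rewrite zle_subl addrC -zle_subl; exact: zltW.
split; first exact: le_tr hts (zle_addr _ Nn_ge0).
rewrite ltr0_norm // -scalerA -zle_subl.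
have -> : s *: t - s *: sy = (- s) *: (sy - t) by rewrite scaleNr scalerBr opprB.
apply: scale_le; first by rewrite oppr_ge0 ltW.
exact: zltW.
Qed.

Lemma fhat_le a : A a -> leO (fhat beta alpha mu nu (socle a)) (f a).
Proof.
move=> ha; have hy : X (socle a) by exists a.
case: (Hint ha ord_max) => z [hz ez].
have ea : a = extend (socle a) (Some z) by rewrite -ez extend_socle.
have fa : f a = Some (Sm (socle a) + s *: z) by rewrite {1}ea fext -?ea.
case eb: (bnd (socle a)) => [sy|]; last by case: (wd hy).
rewrite (fhatE eb) fa /= zleD2l.
case/charA: ha => _ _; rewrite ez; move: eb; case: ifP => hs -> /= h1 h2 _.
  exact: scale_le.
apply: scale_leN => //; by rewrite ltW // ltNge hs.
Qed.

Lemma fhat_min a a0 q0 : A a -> A a0 -> f a0 = Some q0 ->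
  (forall a', A a' -> leO (Some q0) (f a')) ->
  leO (Some (q0 - ((`|s| * Nq) *: one))) (fhat beta alpha mu nu (socle a)).
Proof.
move=> ha ha0 fa0 hmin; have hy : X (socle a) by exists a.
case eb: (bnd (socle a)) => [sy|]; last by case: (wd hy).
case: (fib hy eb) => t [ht [hA [_ [_ hb]]]].
have := hmin _ hA; rewrite fext //= (fhatE eb) /= => h.
rewrite zle_subl addrC -addrA; apply: le_tr h _.
by rewrite zleD2l.
Qed.

Lemma notX_fr x : frontier X x -> ~ X x.
Proof.
move=> hf hx; case: (iso (@X_int) (X_int hx)) => U [oU [Ux hU]].
case: (hf U oU Ux) => y [Uy [cy ny]]; apply: ny.
have e := hU y Uy cy; case: hx => a [ha ea]; exists a; split => // i.
by rewrite ea e.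
Qed.

Lemma bbar_ex : exists bb, (forall y, X y -> bb y = bnd y) /\ cont_on (clos X) bb.
Proof.
case: Hpres => _ _ [_ _ [mb [hm1 hm2]] [nb [hn1 hn2]]] _ _.
case hs: (0 <= alpha ord_max); [exists mb | exists nb]; split => // y hy; rewrite hs; auto.
Qed.

Lemma lim x : frontier X x -> forall c, exists U, openk U /\ U x /\
  forall y, U y -> X y -> ltO (Some c) (fhat beta alpha mu nu y).
Proof.
move=> hfr c; have nx := notX_fr hfr; have cx := clos_frontier hfr.
pose c' := c + (`|s| * Nq) *: one.
have key : forall y sy t, X y -> bnd y = Some sy -> A (extend y (Some t)) ->
    le (s *: t) (s *: sy + (`|s| * Nq) *: one) ->
    ltO (Some c') (f (extend y (Some t))) -> ltO (Some c) (fhat beta alpha mu nu y).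
  move=> y sy t hy e hA hb; rewrite fext // (fhatE e) /= => h.
  have h' : lt c' (Sm y + (s *: sy + (`|s| * Nq) *: one)).
    by apply: lt_le_tr h _; rewrite zleD2l.
  by move: h'; rewrite addrA zltD2r.
case: bbar_ex => bb [hbb cbb].
case ebx: (bb x) => [sig|].
  case: (floorQ sig) => w0 [hw0 [h1 h2]].
  pose b0 := w0 - (Nn + one).
  pose K := ((N ord_max).*2 + 3)%N.
  have hcand : forall j, (j < K)%N -> exists U, openk U /\ U x /\ forall y, U y ->
      (forall t, t = b0 + (j%:R : rat) *: one -> A (extend y (Some t)) ->
        ltO (Some c') (f (extend y (Some t)))).
    move=> j _; case: (nearfr c' (@notA_ext x (Some (b0 + (j%:R : rat) *: one)) nx)).
    move=> U [l [u [oU [Ux [hin hU]]]]]; exists U; split => //; split => // y Uy t et hA.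
    by apply: hU => //; rewrite et.
  case: (inter_fin hcand) => U1 [oU1 [U1x hU1]].
  have oV : openO (@inb G (sig - one) (Some (sig + one))) by apply: openO_inb.
  have hsig : lt (sig - one) sig /\ lt sig (sig + one).
    split; first by rewrite zlt_subl -zsubgt0 addrK one_gt0.
    by rewrite -zsubgt0 addrAC subrr add0r one_gt0.
  case: (cbb x cx _ oV); first by rewrite ebx.
  move=> U2 [oU2 [U2x hU2]].
  exists (fun y => U1 y /\ U2 y); split; first exact: openI.
  split => // y [U1y U2y] hy.
  have := hU2 y U2y (clo_sub hy); rewrite hbb //.
  case eb: (bnd y) => [sy|] //= [hs1 hs2].
  case: (fib hy eb) => t [ht [hA [hlo [hhi hb]]]].
  apply: (key y sy t hy eb hA hb).
  have hKe : ((K%:R : rat) *: one) = Nn + Nn + one + one + one.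
    by rewrite /K -addnn !natrD !scalerDl !scale1r !addrA.
  have [j [hj ej]] : exists j, (j < K)%N /\ t - b0 = (j%:R : rat) *: one.
    apply: Z_count.
    - apply: ZB => //; apply: ZB => //; apply: ZD; [exact: Znat| exact: Zone].
    - apply: zltW; rewrite zsubgt0; apply: lt_le_tr hlo.
      have eb0 : b0 = w0 - one - Nn by rewrite /b0 opprD addrA addrAC.
      rewrite eb0; apply: (@le_lt_tr _ _ (sig - one - Nn)).
        by rewrite !zleD2r.
      by rewrite zltD2r.
    - rewrite zlt_subl.
      have eK : b0 + (K%:R : rat) *: one = w0 + ((Nq + 2) *: one).
        rewrite /b0 -addrA; congr (w0 + _).
        rewrite -[X in - (_ + X)](scale1r one) -scalerDl -scaleNr -scalerDl; congr (_ *: _).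
        rewrite /K -addnn !natrD; ring.
      have e2 : w0 + one + one + Nn = w0 + ((Nq + 2) *: one).
        rewrite -!addrA; congr (w0 + _).
        rewrite -[X in X + (_ + _)](scale1r one) -[X in _ + (X + _)](scale1r one) -!scalerDl.
        congr (_ *: _); ring.
      rewrite eK -e2; apply: le_lt_tr hhi _.
      rewrite zltD2r; apply: lt_le_tr hs2 _.
      by rewrite zleD2r zltW.
  apply: (hU1 y U1y j hj t _ hA); by rewrite -ej addrCA subrr addr0.
case: (nearfr c' (@notA_ext x None nx)) => U1 [l [u [oU1 [U1x [hin hU1]]]]].
have oV : openO (@inb G (l + Nn) None) by apply: openO_inb.
case: (cbb x cx _ oV); first by rewrite ebx.
move=> U2 [oU2 [U2x hU2]].
exists (fun y => U1 y /\ U2 y); split; first exact: openI.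
split => // y [U1y U2y] hy.
have := hU2 y U2y (clo_sub hy); rewrite hbb //.
case eb: (bnd y) => [sy|]; last by case: (wd hy).
move=> /= [hs _].
case: (fib hy eb) => t [ht [hA [hlo [hhi hb]]]].
apply: (key y sy t hy eb hA hb); apply: hU1 => //.
rewrite /= in hin; rewrite hin /=; split => //.
apply: lt_le_tr hlo; by rewrite zlt_subr.
Qed.

Lemma fhat_aff : is_affine [set: 'I_n] X (fhat beta alpha mu nu).
Proof.
have hb : (forall y, X y -> bnd y = None) \/ exists a0 al, forall y, X y ->
    bnd y = Some (a0 + \sum_(i in socleI [set: 'I_n.+1]) al i *: oval (y i)).
  case: Hpres => hmu hnu _ _ _; case hs: (0 <= alpha ord_max); [exact: hmu | exact: hnu].
case: hb => [h|[a0 [al h]]].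
  by left => y hy; case: (wd hy); exact: h y hy.
right; exists (beta + s *: a0), (fun i => alpha (widen_ord (leqnSn n) i) + s * al i).
move=> y hy; rewrite (fhatE (h y hy)); congr Some; rewrite /Sm.
have e1 : \sum_(i in socleI [set: 'I_n.+1]) al i *: oval (y i) = \sum_(i < n) al i *: oval (y i).
  by apply: eq_bigl => i; rewrite /socleI inE in_setT.
have e2 : \sum_(i in [set: 'I_n]) (alpha (widen_ord (leqnSn n) i) + s * al i) *: oval (y i)
   = \sum_(i < n) (alpha (widen_ord (leqnSn n) i) + s * al i) *: oval (y i).
  by apply: eq_bigl => i; rewrite in_setT.
rewrite e1 e2 scalerDr scaler_sumr.
under [X in _ = _ + X]eq_bigr => i _ do rewrite scalerDl -scalerA.
by rewrite big_split /= addrACA.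
Qed.

Lemma fhat_lc : lc X (fhat beta alpha mu nu).
Proof.
pose g y := if excluded_middle_informative (X y) then fhat beta alpha mu nu y else None.
exists g; split.
  by move=> y hy; rewrite /g; case: excluded_middle_informative.
move=> x cx V oV hV.
case: (excluded_middle_informative (X x)) => hx.
  case: (iso (@X_int) (X_int hx)) => U [oU [Ux hU]].
  exists U; split => //; split => // y Uy cy.
  have -> : y = x by apply: functional_extensionality; exact: hU.
  exact: hV.
have gx : g x = None by rewrite /g; case: excluded_middle_informative.
move: hV; rewrite gx => hV.
case: (oV _ hV) => l [u [hin hall]]; rewrite /= in hin; subst u.
have hfr : frontier X x by apply: clo_sub; split.
case: (lim hfr l) => U [oU [Ux hU]].
exists U; split => //; split => // y Uy cy.
apply: hall; rewrite /g; case: excluded_middle_informative => hy //=.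
by have := hU y Uy hy; case: (fhat beta alpha mu nu y) => [v|] //=.
Qed.

Lemma main_sec :
  [/\ (forall x, socleS A x ->
         if 0 <= alpha ord_max then mu x <> None else nu x <> None),
      (is_affine [set: 'I_n] (socleS A) (fhat beta alpha mu nu) /\
       lc (socleS A) (fhat beta alpha mu nu)),
      (forall x, frontier (socleS A) x -> forall c : zQ G,
         exists U, openk U /\ U x /\
           forall y, U y -> socleS A y -> ltO (Some c) (fhat beta alpha mu nu y)) &
      forall a, A a ->
        leO (fhat beta alpha mu nu (socle a)) (f a) /\
        (forall a0 q0, A a0 -> f a0 = Some q0 -> (forall a', A a' -> leO (Some q0) (f a')) ->
           leO (Some (q0 - ((`|alpha ord_max| * (N ord_max)%:R) *: zone G)))
               (fhat beta alpha mu nu (socle a)))].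
Proof.
split.
- move=> x hx; have := wd hx; by case: ifP.
- split; [exact: fhat_aff | exact: fhat_lc].
- exact: lim.
- move=> a ha; split; first exact: fhat_le.
  move=> a0 q0 ha0 fa0 hmin; exact: fhat_min ha0 fa0 hmin.
Qed.

End Main.



Unset Implicit Arguments. Set Strict Implicit.

(* m = n.+1 >= 1 *)
Theorem lemma4p2 (G : zgroup) (n : nat) (N : 'I_n.+1 -> nat)
    (A : ('I_n.+1 -> Omega G) -> Prop) (mu nu : ('I_n -> Omega G) -> Omega G) (rho : nat)
    (f : ('I_n.+1 -> Omega G) -> Omega G) (alpha : 'I_n.+1 -> rat) (beta : zQ G) :
  (forall i, 0 < N i)%N ->
  (forall a, A a -> forall i, exists z, @zZ G z /\ a i = Some z) ->
  lc_precell N [set: 'I_n.+1] A ->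
  lc_pres N [set: 'I_n.+1] A mu nu rho ->
  is_affine [set: 'I_n.+1] A f ->
  (exists fbar, lc_ext A f fbar /\ forall x, frontier A x -> fbar x = None) ->
  (forall a, A a -> f a = Some (affQ beta alpha (fun i => oval (a i)))) ->
  [/\ (* hat f is well defined *)
      (forall x, socleS A x ->
         if 0 <= alpha ord_max then mu x <> None else nu x <> None),
      (* hat f is a largely continuous affine map on X *)
      (is_affine [set: 'I_n] (socleS A) (fhat beta alpha mu nu) /\
       lc (socleS A) (fhat beta alpha mu nu)),
      (* with limit +oo at every point of the frontier of X *)
      (forall x, frontier (socleS A) x -> forall c : zQ G,
         exists U, openk U /\ U x /\
           forall y, U y -> socleS A y -> ltO (Some c) (fhat beta alpha mu nu y)) &
      (* min f(A) - |alpha_m| N_m <= hat f (hat a) <= f(a) *)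
      forall a, A a ->
        leO (fhat beta alpha mu nu (socle a)) (f a) /\
        (forall a0 q0, A a0 -> f a0 = Some q0 -> (forall a', A a' -> leO (Some q0) (f a')) ->
           leO (Some (q0 - ((`|alpha ord_max| * (N ord_max)%:R) *: zone G)))
               (fhat beta alpha mu nu (socle a)))].
Proof.
move=> HN Hint _ Hpres _ [fbar [Hext Hfr]] Hf.
exact: (main_sec HN Hint Hpres Hext Hfr Hf).
Qed.
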